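(* Let $G$ be a graph with girth $g(G)\ge 7$. Then every color class $C$ of a partition of $V(G)$ into $\chi_{\mu_2}(G)$ many $2$-distance mutual-visibility sets is a subset of the closed neighborhood $N_G[v]$ of some vertex $v$ of $G$. In particular, if $|C|\ge 3$, then $C$ is a subset of the open neighborhood $N_G(v)$ of some vertex $v$ of $G$.
   Context: The girth $g(G)$ is the length of a shortest cycle of $G$, with $g(G)=\infty$ if $G$ is a forest. $N_G(v)$ is the set of neighbors of $v$ and $N_G[v]=N_G(v)\cup\{v\}$. A set $M\subseteq V(G)$ is a $2$-distance mutual-visibility set if for every two vertices $u,v\in M$ there exists a shortest $u,v$-path of length at most $2$ none of whose internal vertices lies in $M$. $\chi_{\mu_2}(G)$ is the minimum cardinality of a partition of $V(G)$ into $2$-distance mutual-visibility sets. *)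

(* Defs.v *)
From mathcomp Require Import all_boot.
Set Implicit Arguments. Unset Strict Implicit. Unset Printing Implicit Defensive.

Definition simple_graph (T : finType) (e : rel T) : Prop :=
  symmetric e /\ irreflexive e.

(* Forests (no cycle) satisfy this vacuously (girth = infinity). *)
Definition girth_ge (T : finType) (e : rel T) (n : nat) : Prop :=
  forall c : seq T, ucycle e c -> 3 <= size c -> n <= size c.

Definition Nopen (T : finType) (e : rel T) (v : T) : {set T} := [set u | e v u].
Definition Nclosed (T : finType) (e : rel T) (v : T) : {set T} := v |: Nopen e v.

(* a u,v-path given as the sequence of vertices after u, ending at v;
   its length is size p *)
Definition is_walk (T : finType) (e : rel T) (u v : T) (p : seq T) : Prop :=
  path e u p /\ last u p = v.

Definition is_shortest (T : finType) (e : rel T) (u v : T) (p : seq T) : Prop :=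
  is_walk e u v p /\ forall q, is_walk e u v q -> size p <= size q.

(* internal vertices of the path u :: p (p ends at v) *)
Definition internal (T : eqType) (p : seq T) : seq T := take (size p).-1 p.

Definition dmv2 (T : finType) (e : rel T) (M : {set T}) : Prop :=
  forall u v, u \in M -> v \in M ->
    exists p, is_shortest e u v p /\ size p <= 2 /\
              forall w, w \in internal p -> w \notin M.

Definition dmv2_partition (T : finType) (e : rel T) (P : {set {set T}}) : Prop :=
  partition P [set: T] /\ forall C, C \in P -> dmv2 e C.

Definition optimal_dmv2_partition (T : finType) (e : rel T) (P : {set {set T}}) : Prop :=
  dmv2_partition e P /\ forall Q, dmv2_partition e Q -> #|P| <= #|Q|.

(* Main.v *)
Require Import Defs.
From mathcomp Require Import all_boot.

Section Aux.
Variables (T : finType) (e : rel T).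
Hypothesis sym : symmetric e.
Hypothesis irr : irreflexive e.
Hypothesis gir : girth_ge e 7.

Lemma nocyc (c : seq T) : cycle e c -> uniq c -> 3 <= size c -> size c <= 6 -> False.
Proof.
move=> Hc Hu H3 H6.
have := @gir c (introT andP (conj Hc Hu)) H3.
by move=> H7; have := leq_trans H7 H6.
Qed.

Lemma walk2 u v p : is_walk e u v p -> size p <= 2 ->
  u = v \/ e u v \/ exists x, e u x /\ e x v.
Proof.
case=> Hp Hl; case: p Hp Hl => [|x [|y [|z p]]] //=.
- by move=> _ ->; left.
- by rewrite andbT => H <-; right; left.
- by rewrite andbT => /andP [H1 H2] <-; right; right; exists x.
Qed.

End Aux.

Ltac neqt sym irr :=
  apply/eqP => Heq; subst;
  repeat match goal with
  | H : is_true (?e ?x ?x) |- _ => by rewrite irr in H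
  | H : is_true (?x != ?x) |- _ => by rewrite eqxx in H
  | H1 : is_true (?e ?x ?y), H2 : is_true (~~ ?e ?x ?y) |- _ => by rewrite H1 in H2
  | H1 : is_true (?e ?x ?y), H2 : is_true (~~ ?e ?y ?x) |- _ => by rewrite sym H1 in H2
  | H1 : is_true (?x \in ?C), H2 : is_true (?x \notin ?C) |- _ => by rewrite H1 in H2
  end.

Ltac cyc sym irr gir c :=
  apply: (@nocyc _ _ gir c);
  [ rewrite /=; repeat (apply/andP; split); try done; by rewrite sym
  | rewrite /= !inE !negb_or /=; repeat (apply/andP; split); try done; neqt sym irr
  | done | done ].

Theorem lemma3p3 (T : finType) (e : rel T) (P : {set {set T}}) :
  simple_graph e -> girth_ge e 7 -> optimal_dmv2_partition e P ->
  forall C, C \in P ->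
    (exists v, C \subset Nclosed e v) /\
    (3 <= #|C| -> exists v, C \subset Nopen e v).
Proof.
move=> [sym irr] gir [[Hpart Hdmv] _] C HC.
have HD := Hdmv C HC.
have W : forall u v, u \in C -> v \in C -> u = v \/ e u v \/ exists x, e u x /\ e x v.
  move=> u v Hu Hv; have [p [[Hw _] [Hs _]]] := HD u v Hu Hv.
  exact: walk2 Hw Hs.
have part1 : exists v, C \subset Nclosed e v.
  case: (boolP [exists a, exists b, [&& a \in C, b \in C, a != b & ~~ e a b]]).
  - move=> /existsP [a /existsP [b /and4P [Ha Hb Hab Hnab]]].
    have [Heq|[Hab'|[m [Ham Hmb]]]] := W a b Ha Hb.
    + by rewrite Heq eqxx in Hab.
    + by rewrite Hab' in Hnab.
    exists m; apply/subsetP => c Hc.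
    rewrite /Nclosed /Nopen !inE.
    case: (boolP (c == m)) => //= Hcm.
    case: (boolP (e m c)) => //= Hmc.
    have Hcm' : ~~ e c m by rewrite sym.
    have Hma : e m a by rewrite sym.
    have Hbm : e b m by rewrite sym.
    exfalso.
    have [Hca|[Hca|[y [Hcy Hya]]]] := W c a Hc Ha.
    + by subst; rewrite Hma in Hmc.
    + have [Hcb|[Hcb|[x [Hcx Hxb]]]] := W c b Hc Hb.
      * by subst; rewrite sym Hbm in Hmc.
      * by cyc sym irr gir [:: c; a; m; b].
      * by cyc sym irr gir [:: c; a; m; b; x].
    + have [Hcb|[Hcb|[x [Hcx Hxb]]]] := W c b Hc Hb.
      * by subst; rewrite sym Hbm in Hmc.
      * by cyc sym irr gir [:: c; b; m; a; y].
      * case: (eqVneq x y) => [Exy|Nxy].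
          subst. by cyc sym irr gir [:: a; m; b; y].
        by cyc sym irr gir [:: c; y; a; m; b; x].
  - move/existsPn => Hn.
    case/and3P: Hpart => _ _ H0.
    have: C != set0 by apply: contraNneq H0 => <-.
    case/set0Pn => v Hv; exists v; apply/subsetP => c Hc.
    rewrite /Nclosed /Nopen !inE.
    case: (boolP (c == v)) => //= Hcv.
    have := Hn c; move/existsPn => /(_ v).
    by rewrite Hc Hv Hcv /= negbK sym.
split => // H3.
case: part1 => v Hsub.
case: (boolP (v \in C)) => Hv; last first.
  exists v; apply/subsetP => c Hc.
  have := subsetP Hsub c Hc; rewrite /Nclosed !inE.
  case/orP => // /eqP E; subst; by rewrite Hc in Hv.
exfalso.
have : 1 < #|C :\ v| by rewrite (cardsD1 v C) Hv in H3.
case/card_gt1P => u [w [Hu Hw Huw]].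
move: Hu Hw; rewrite !inE => /andP [Huv HuC] /andP [Hwv HwC].
have Hvu : e v u.
  have := subsetP Hsub u HuC; rewrite /Nclosed /Nopen !inE.
  by rewrite (negbTE Huv).
have Hvw : e v w.
  have := subsetP Hsub w HwC; rewrite /Nclosed /Nopen !inE.
  by rewrite (negbTE Hwv).
have [p [[[Hp Hl] _] [Hs Hint]]] := HD u w HuC HwC.
case: p Hp Hl Hs Hint => [|x [|y [|z p]]] //=.
- by move=> _ E; subst; rewrite eqxx in Huw.
- rewrite andbT => Hux E _ _; subst.
  by cyc sym irr gir [:: u; v; w].
- rewrite andbT => /andP [Hux Hxy] E _ Hint; subst.
  have Hx : x \notin C by apply: Hint; rewrite /internal /= inE.
  by cyc sym irr gir [:: u; v; w; x].
Qed.
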